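(* If a database with integrity constraints $\langle\mathcal{I},\eta\rangle$ (in the setting described below) is consistent, then it has a possible world $U$ such that $|\mathit{Dom}(U)|=O(\mathit{size}(\mathcal{I})+\mathit{size}(\eta))$, where the constant in the $O$-notation depends only on the fixed database schema.
   Context: Constants: $\mathit{Dom}=\{\bot,1,2,\dots\}$ with $\bot$ the null value, $\mathit{Dom}_d=\{1,2,\dots\}$; the only built-in relations are $=$ and $\le$. The set of base predicate symbols (hence the maximum arity) is fixed. For a set $S$ of atoms, $\mathit{Dom}(S)$ is the set of constants occurring in $S$; $\mathit{size}(\cdot)$ is the size of the representation. Facts are ground atoms; definite facts contain no $\bot$. For tuples, $t\preceq t'$ if each $t_i=t'_i$ or $t_i=\bot$; $a\approx b$ if some $s$ has $a\preceq s,b\preceq s$. For a set $S$ of facts: $S^\Downarrow=\{a:\exists b\in S,a\preceq b\}$, $S^\Uparrow=\{a:\exists b\in S,b\preceq a\}$, $S^\approx=\{a:\exists b\in S,b\approx a\}$, $S^\sim=S^\approx\setminus S^\Downarrow$. A database is $\mathcal{I}=\langle D,E\rangle$, $D,E$ finite sets of base facts; $\mathcal{I}_t=D^\Downarrow$, $\mathcal{I}_u=D^\sim\setminus E^\Uparrow$; a possible world of $\mathcal{I}$ is a set $W$ of definite facts with $\mathcal{I}_t\subseteq W^\Downarrow$ and $W\subseteq\mathcal{I}_t\cup\mathcal{I}_u$. Integrity constraints have the form $\exists X\,\forall Y\,(A_1\wedge\dots\wedge A_k\rightarrow B_1\vee\dots\vee B_m)$, atoms without $\bot$ over base and built-in predicates,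 every variable in $X\cup Y$ and occurring in some base-predicate $A_i$. A possible world of $\langle\mathcal{I},\eta\rangle$ is a possible world of $\mathcal{I}$ satisfying every constraint of $\eta$ (as an interpretation with domain $\mathit{Dom}_d$); $\langle\mathcal{I},\eta\rangle$ is consistent if one exists. *)

(* Defs.v *)
From Stdlib Require Import List Arith.
Import ListNotations.

(* Constants: Dom = nat, with 0 playing the role of the null value ⊥,
   and Dom_d = {1,2,...} = the nonzero naturals. *)
Definition null : nat := 0.

(* A fixed schema: predicate symbol p (a nat) is a base predicate iff
   p < length sch, and its arity is nth p sch 0. *)
Definition schema := list nat.

Record fact := mkFact { fpred : nat; fargs : list nat }.

Definition base_fact (sch : schema) (f : fact) : Prop :=
  fpred f < length sch /\ length (fargs f) = nth (fpred f) sch 0.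

Definition definite (f : fact) : Prop := Forall (fun c => c <> null) (fargs f).

Definition fset := fact -> Prop.

Definition fle (a b : fact) : Prop :=
  fpred a = fpred b /\ Forall2 (fun x y => x = y \/ x = null) (fargs a) (fargs b).

Definition fapprox (a b : fact) : Prop := exists s, fle a s /\ fle b s.

Definition down (S : fset) : fset := fun a => exists b, S b /\ fle a b.
Definition up (S : fset) : fset := fun a => exists b, S b /\ fle b a.
Definition approxS (S : fset) : fset := fun a => exists b, S b /\ fapprox b a.
Definition tildeS (S : fset) : fset := fun a => approxS S a /\ ~ down S a.

Definition of_list (l : list fact) : fset := fun a => In a l.

Record database := mkDB { dbD : list fact; dbE : list fact }.

Definition It (I : database) : fset := down (of_list (dbD I)).
Definition Iu (I : database) : fset :=
  fun a => tildeS (of_list (dbD I)) a /\ ~ up (of_list (dbE I)) a.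

Definition wf_database (sch : schema) (I : database) : Prop :=
  Forall (base_fact sch) (dbD I) /\ Forall (base_fact sch) (dbE I).

Definition possible_world_db (I : database) (W : fset) : Prop :=
  (forall a, W a -> definite a) /\
  (forall a, It I a -> down W a) /\
  (forall a, W a -> It I a \/ Iu I a).

(* Integrity constraints  ∃X ∀Y (A1 ∧ ... ∧ Ak -> B1 ∨ ... ∨ Bm). *)
Inductive term := TVar (v : nat) | TCst (c : nat).

Inductive atom :=
  | ABase (p : nat) (ts : list term)
  | AEq (s t : term)
  | ALe (s t : term).

Record constraint := mkIC {
  ic_ex : list nat;
  ic_all : list nat;
  ic_body : list atom;
  ic_head : list atom
}.

Definition term_vars (t : term) : list nat :=
  match t with TVar v => [v] | TCst _ => [] end.
Definition term_csts (t : term) : list nat :=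
  match t with TVar _ => [] | TCst c => [c] end.

Definition atom_terms (a : atom) : list term :=
  match a with ABase _ ts => ts | AEq s t => [s; t] | ALe s t => [s; t] end.

Definition atom_vars (a : atom) : list nat := flat_map term_vars (atom_terms a).

Definition base_atom_vars (a : atom) : list nat :=
  match a with ABase _ ts => flat_map term_vars ts | _ => [] end.

Definition wf_atom (sch : schema) (a : atom) : Prop :=
  Forall (fun t => Forall (fun c => c <> null) (term_csts t)) (atom_terms a) /\
  match a with
  | ABase p ts => p < length sch /\ length ts = nth p sch 0
  | _ => True
  end.

Definition wf_constraint (sch : schema) (ic : constraint) : Prop :=
  (forall v, In v (ic_ex ic) -> ~ In v (ic_all ic)) /\
  Forall (wf_atom sch) (ic_body ic ++ ic_head ic) /\
  (forall a v, In a (ic_body ic ++ ic_head ic) -> In v (atom_vars a) ->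
     In v (ic_ex ic ++ ic_all ic)) /\
  (forall v, In v (ic_ex ic ++ ic_all ic) ->
     exists a, In a (ic_body ic) /\ In v (base_atom_vars a)).

Definition eval_term (nu : nat -> nat) (t : term) : nat :=
  match t with TVar v => nu v | TCst c => c end.

Definition holds (W : fset) (nu : nat -> nat) (a : atom) : Prop :=
  match a with
  | ABase p ts => W (mkFact p (map (eval_term nu) ts))
  | AEq s t => eval_term nu s = eval_term nu t
  | ALe s t => eval_term nu s <= eval_term nu t
  end.

Definition satisfies (W : fset) (ic : constraint) : Prop :=
  exists nu1 : nat -> nat,
    (forall x, In x (ic_ex ic) -> nu1 x <> null) /\
    forall nu2 : nat -> nat,
      (forall y, In y (ic_all ic) -> nu2 y <> null) ->
      let nu := fun v => if in_dec Nat.eq_dec v (ic_ex ic) then nu1 v else nu2 v in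
      Forall (holds W nu) (ic_body ic) -> Exists (holds W nu) (ic_head ic).

Definition possible_world (I : database) (eta : list constraint) (W : fset) : Prop :=
  possible_world_db I W /\ Forall (satisfies W) eta.

Definition consistent (I : database) (eta : list constraint) : Prop :=
  exists W, possible_world I eta W.

(* Sizes: number of symbols of the representation. *)
Definition size_fact (f : fact) : nat := 1 + length (fargs f).
Definition size_facts (l : list fact) : nat := fold_right (fun f n => size_fact f + n) 0 l.
Definition size_db (I : database) : nat := size_facts (dbD I) + size_facts (dbE I).

Definition size_atom (a : atom) : nat := 1 + length (atom_terms a).
Definition size_atoms (l : list atom) : nat := fold_right (fun a n => size_atom a + n) 0 l.
Definition size_constraint (ic : constraint) : nat :=
  1 + length (ic_ex ic) + length (ic_all ic) + size_atoms (ic_body ic) + size_atoms (ic_head ic).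
Definition size_constraints (l : list constraint) : nat :=
  fold_right (fun ic n => size_constraint ic + n) 0 l.

(* |Dom(U)| <= n : the constants occurring in U are among n values. *)
Definition dom_card_le (U : fset) (n : nat) : Prop :=
  exists L : list nat, length L <= n /\
    forall f c, U f -> In c (fargs f) -> In c L.

(* Main.v *)
Require Import Defs.
From Stdlib Require Import List Arith Lia.
Import ListNotations.

Lemma fle_trans a b c : fle a b -> fle b c -> fle a c.
Proof.
  unfold fle; intros [H1 H2] [H3 H4]; split; [congruence|].
  revert H4; generalize (fargs c); clear -H2; intros l0.
  induction H2 in l0 |- *; intros H4; inversion H4; subst; constructor; auto.
  repeat match goal with H : _ \/ _ |- _ => destruct H end; subst; auto.
Qed.

Lemma choose_ws (W : fset) (D : list Defs.fact) :
  (forall d, In d D -> exists w, W w /\ fle d w) ->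
  exists Ws, Forall2 (fun d w => W w /\ fle d w) D Ws.
Proof.
  induction D as [|d D IH]; intros H.
  - exists []; constructor.
  - destruct (H d (or_introl eq_refl)) as [w Hw].
    destruct IH as [Ws HWs]; [intros; apply H; right; auto|].
    exists (w :: Ws); constructor; auto.
Qed.

Lemma forall2_in (P : Defs.fact -> Defs.fact -> Prop) D Ws d :
  Forall2 P D Ws -> In d D -> exists w, In w Ws /\ P d w.
Proof.
  induction 1; simpl; [tauto|]. intros [->|H1].
  - exists y; auto.
  - destruct (IHForall2 H1) as [w [? ?]]; exists w; auto.
Qed.

Lemma forall2_len (W : fset) D Ws :
  Forall2 (fun d w => W w /\ fle d w) D Ws ->
  length (flat_map fargs Ws) <= size_facts D.
Proof.
  induction 1; simpl; [lia|].
  rewrite length_app. destruct H as [_ [_ H]].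
  rewrite <- (Forall2_length H). unfold size_fact. lia.
Qed.
Arguments forall2_len {W}.

Definition ic_csts (ic : constraint) : list nat :=
  flat_map (fun a => flat_map term_csts (atom_terms a)) (ic_head ic).
Definition eta_csts (eta : list constraint) : list nat := flat_map ic_csts eta.

Lemma csts_len_terms ts : length (flat_map term_csts ts) <= length ts.
Proof. induction ts as [|[v|c] ts IH]; simpl; lia. Qed.

Lemma csts_len_atoms l :
  length (flat_map (fun a => flat_map term_csts (atom_terms a)) l) <= size_atoms l.
Proof.
  induction l as [|a l IH]; simpl; [lia|]. rewrite length_app.
  pose proof (csts_len_terms (atom_terms a)). unfold size_atom. lia.
Qed.

Lemma eta_csts_len eta : length (eta_csts eta) <= size_constraints eta.
Proof.
  induction eta as [|ic eta IH]; simpl; [lia|]. rewrite length_app.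
  pose proof (csts_len_atoms (ic_head ic)). unfold ic_csts, size_constraint. lia.
Qed.

Lemma in_tvar v ts : In v (flat_map term_vars ts) -> In (TVar v) ts.
Proof.
  rewrite in_flat_map. intros [t [Ht Hv]]. destruct t; simpl in Hv; [|tauto].
  destruct Hv as [->|[]]; auto.
Qed.

Lemma head_ok sch (W : fset) (L : list nat) ic nu :
  wf_constraint sch ic ->
  (forall c, In c (ic_csts ic) -> In c L) ->
  let U := fun f => W f /\ forall c, In c (fargs f) -> In c L in
  Forall (holds U nu) (ic_body ic) ->
  Exists (holds W nu) (ic_head ic) -> Exists (holds U nu) (ic_head ic).
Proof.
  intros [_ [_ [Hcl Hsafe]]] Hc U Hb Hh.
  apply Exists_exists in Hh as [a [Ha Hha]]. apply Exists_exists. exists a; split; auto.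
  destruct a as [p ts|s t|s t]; simpl in *; auto.
  split; auto. simpl. intros c Hin. apply in_map_iff in Hin as [t [<- Ht]].
  destruct t as [v|c]; simpl.
  - assert (Hv : In v (ic_ex ic ++ ic_all ic)).
    { apply (Hcl (ABase p ts)); [apply in_or_app; right; auto|].
      unfold atom_vars; simpl. apply in_flat_map. exists (TVar v); simpl; auto. }
    destruct (Hsafe v Hv) as [b [Hb1 Hb2]].
    rewrite Forall_forall in Hb. specialize (Hb b Hb1).
    destruct b as [p' ts'| |]; simpl in Hb2; try tauto.
    simpl in Hb. destruct Hb as [_ Hb]. apply Hb. simpl.
    apply in_map_iff. exists (TVar v); split; auto. apply in_tvar; auto.
  - apply Hc. unfold ic_csts. apply in_flat_map. exists (ABase p ts); split; auto.
    simpl. apply in_flat_map. exists (TCst c); simpl; auto.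
Qed.

Theorem lemma1 :
  forall sch : schema, exists C : nat,
    forall (I : database) (eta : list constraint),
      wf_database sch I ->
      Forall (wf_constraint sch) eta ->
      consistent I eta ->
      exists U, possible_world I eta U /\
        dom_card_le U (C * (size_db I + size_constraints eta)).
Proof.
  intros sch. exists 1. intros I eta _ Hwf [W [[Hdef [Hcov Hsub]] Hsat]].
  destruct (choose_ws W (dbD I)) as [Ws HWs].
  { intros d Hd. destruct (Hcov d) as [w [Hw Hle]].
    - exists d; split; [exact Hd|]. split; auto. induction (fargs d); constructor; auto.
    - exists w; auto. }
  set (L := flat_map fargs Ws ++ eta_csts eta).
  exists (fun f => W f /\ forall c, In c (fargs f) -> In c L). split.
  - split.
    + split; [intros a [Ha _]; auto|split].
      * intros a [d [Hd Hle]].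
        destruct (forall2_in _ _ _ d HWs Hd) as [w [Hin [Hw Hle']]].
        exists w; split; [split; auto|eapply fle_trans; eauto].
        intros c Hc. apply in_or_app; left. apply in_flat_map; eauto.
      * intros a [Ha _]; auto.
    + rewrite Forall_forall in *. intros ic Hic.
      destruct (Hsat ic Hic) as [nu1 [Hnu1 Hall]]. exists nu1; split; auto.
      intros nu2 Hnu2 nu Hb.
      apply (head_ok sch W L ic nu (Hwf ic Hic)).
      * intros c Hc. apply in_or_app; right. unfold eta_csts. apply in_flat_map; eauto.
      * exact Hb.
      * apply (Hall nu2 Hnu2). eapply Forall_impl; [|exact Hb].
        intros a. destruct a; simpl; tauto.
  - exists L. split.
    + unfold L. rewrite length_app. pose proof (forall2_len _ _ HWs).
      pose proof (eta_csts_len eta). unfold size_db. lia.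
    + intros f c [_ H]; auto.
Qed.
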